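(* Let $c,d\in(0,1]$, let $B=B(c,d)$, and define $h(x)=\dfrac{xF(c,d;c+d;x)}{\log(1/(1-x))}$ for $x\in(0,1)$. Let $p\ge1$. Then for all $x\in(0,1)$, with $z=1-(1-x)^{1/p}$, $$B\ge B\,h(z)\ge B\,h(x)\ge 1\qquad\text{and}\qquad F(c,d;c+d;z)\ge \tfrac1p F(c,d;c+d;x).$$ When $c=d=1$ one has $B=1$ and $h\equiv1$, so the first chain consists of equalities.
   Context: $F(a,b;c;x)$ is the Gaussian hypergeometric function $\sum_{n\ge0}\frac{(a)_n(b)_n}{(c)_n}\frac{x^n}{n!}$ ($|x|<1$), with $(a)_n=a(a+1)\cdots(a+n-1)$, $(a)_0=1$. $B(c,d)=\Gamma(c)\Gamma(d)/\Gamma(c+d)$ is the beta function. *)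

(* Defs.v *)
From Stdlib Require Import Reals Arith ClassicalEpsilon.
Open Scope R_scope.

Fixpoint poch (a : R) (n : nat) : R :=
  match n with
  | O => 1
  | S k => poch a k * (a + INR k)
  end.

Definition hyp_term (a b c x : R) (n : nat) : R :=
  poch a n * poch b n / poch c n * x ^ n / INR (Factorial.fact n).

(* F(a,b;c;x) := the sum of the series (well defined for |x| < 1, c not a
   non-positive integer). *)
Definition F (a b c x : R) : R :=
  epsilon (inhabits 0) (fun l => infinite_sum (hyp_term a b c x) l).

(* Gamma via Gauss' product: Gamma(s) = lim n^s n! / (s(s+1)...(s+n)), s > 0 *)
Definition gauss_seq (s : R) (n : nat) : R :=
  Rpower (INR n) s * INR (Factorial.fact n) / poch s (S n).

Definition Gamma (s : R) : R :=
  epsilon (inhabits 0) (fun g => Un_cv (gauss_seq s) g).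

Definition Beta (c d : R) : R := Gamma c * Gamma d / Gamma (c + d).

Definition h (c d x : R) : R := x * F c d (c + d) x / ln (1 / (1 - x)).

(* Main.v *)
From Stdlib Require Import Reals Lra Lia Psatz ClassicalEpsilon FunctionalExtensionality.
From Coquelicot Require Import Coquelicot.
Require Import Defs.
Open Scope R_scope.

Definition acoef (c d : R) (n : nat) : R :=
  poch c n * poch d n / poch (c + d) n / INR (Factorial.fact n).
Definition tcoef (c d : R) (n : nat) : R := INR (S n) * acoef c d n.

Lemma poch_pos a n : 0 < a -> 0 < poch a n.
Proof.
  intros Ha; induction n; simpl. lra.
  apply Rmult_lt_0_compat; auto. pose proof (pos_INR n); lra.
Qed.

Lemma fact_pos n : 0 < INR (Factorial.fact n).
Proof. apply lt_0_INR, Factorial.lt_O_fact. Qed.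

Lemma acoef_S c d n : 0 < c -> 0 < d ->
  acoef c d (S n) = acoef c d n * ((c + INR n) * (d + INR n) / ((c + d + INR n) * INR (S n))).
Proof.
  intros Hc Hd. unfold acoef. simpl poch. rewrite fact_simpl, mult_INR.
  pose proof (poch_pos c n Hc). pose proof (poch_pos d n Hd).
  pose proof (poch_pos (c+d) n ltac:(lra)). pose proof (fact_pos n).
  pose proof (pos_INR n). rewrite S_INR. field. repeat split; lra.
Qed.

Lemma acoef_pos c d n : 0 < c -> 0 < d -> 0 < acoef c d n.
Proof.
  intros. unfold acoef. pose proof (poch_pos c n H). pose proof (poch_pos d n H0).
  pose proof (poch_pos (c+d) n ltac:(lra)). pose proof (fact_pos n).
  apply Rdiv_lt_0_compat; auto. apply Rdiv_lt_0_compat; auto. nra.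
Qed.

Lemma tcoef_S c d n : 0 < c <= 1 -> 0 < d <= 1 ->
  tcoef c d (S n) <= tcoef c d n.
Proof.
  intros Hc Hd. unfold tcoef. rewrite acoef_S by lra.
  pose proof (acoef_pos c d n ltac:(lra) ltac:(lra)).
  set (A := acoef c d n) in *. rewrite !S_INR. pose proof (pos_INR n).
  set (m := INR n) in *.
  assert (K1 : c*d <= 1) by nra.
  assert (K2 : 0 <= m*(1-c*d)) by nra.
  assert (K3 : 0 <= c*(1-d)) by nra.
  assert (K4 : 0 <= d*(1-c)) by nra.
  assert (K : (m+1+1) * ((c+m)*(d+m)) <= (m+1)*(m+1)*(c+d+m)) by nra.
  replace ((m + 1 + 1) * (A * ((c + m) * (d + m) / ((c + d + m) * (m + 1)))))
    with (A * ((m+1+1)*((c+m)*(d+m))) / ((c+d+m)*(m+1))) by (field; lra).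
  assert (Y : 0 < (c+d+m)*(m+1)) by nra.
  assert (E : A * ((m+1+1)*((c+m)*(d+m))) / ((c+d+m)*(m+1)) * ((c+d+m)*(m+1)) = A * ((m+1+1)*((c+m)*(d+m)))) by (field; lra).
  apply Rmult_le_reg_r with ((c+d+m)*(m+1)). exact Y.
  rewrite E. nra.
Qed.

Lemma tcoef_0 c d : tcoef c d 0 = 1.
Proof. unfold tcoef, acoef; simpl. field. Qed.

Lemma tcoef_le1 c d n : 0 < c <= 1 -> 0 < d <= 1 -> tcoef c d n <= 1.
Proof.
  intros. induction n. rewrite tcoef_0; lra.
  pose proof (tcoef_S c d n H H0). lra.
Qed.

Lemma tcoef_11 n : tcoef 1 1 n = 1.
Proof.
  induction n. apply tcoef_0. unfold tcoef in *. rewrite acoef_S by lra.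
  rewrite !S_INR in *. pose proof (pos_INR n).
  assert (E : acoef 1 1 n = / (INR n + 1)) by (apply Rmult_eq_reg_l with (INR n + 1); [rewrite IHn; field|]; lra).
  rewrite E. field. lra.
Qed.


Definition Sp (N : nat) (y : R) := sum_f_R0 (fun k => y ^ (S k) / INR (S k)) N.

Lemma Sp_der N y : is_derive (Sp N) y (sum_f_R0 (fun k => y ^ k) N).
Proof.
  induction N; unfold Sp; simpl sum_f_R0.
  - auto_derive; auto. simpl; field.
  - apply (is_derive_plus (fun y => sum_f_R0 (fun k => y ^ S k / INR (S k)) N)
            (fun y => y ^ S (S N) / INR (S (S N)))). exact IHN.
    auto_derive; [auto|].
    change (match N with 0%nat => 1 | S _ => INR N + 1 end) with (INR (S N)). field. pose proof (pos_INR (S N)); lra.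
Qed.

Lemma Lg_der y : y < 1 -> is_derive (fun y => ln (1 / (1 - y))) y (/ (1 - y)).
Proof.
  intros. auto_derive. repeat split; try lra. apply Rmult_lt_0_compat; [lra|apply Rinv_0_lt_compat; lra]. field. lra.
Qed.

Lemma Sp0 N : Sp N 0 = 0.
Proof. induction N. unfold Sp; simpl; field. unfold Sp in *. rewrite tech5, IHN. rewrite pow_i by lia. unfold Rdiv; ring. Qed.

Lemma Rem_bound N x : 0 < x < 1 ->
  0 <= ln (1 / (1 - x)) - Sp N x <= x ^ (S (S N)) / (1 - x).
Proof.
  intros Hx.
  destruct (MVT_cor2 (fun y => ln (1 / (1 - y)) - Sp N y)
     (fun y => / (1 - y) - sum_f_R0 (fun k => y ^ k) N) 0 x) as [xi [E Hxi]].
  lra.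
  { intros y Hy. apply is_derive_Reals.
    apply (is_derive_minus (fun y => ln (1 / (1 - y))) (Sp N)).
    apply Lg_der; lra. apply Sp_der. }
  rewrite Sp0 in E. replace (1 - 0) with 1 in E by ring.
  replace (1/1) with 1 in E by field. rewrite ln_1 in E.
  assert (G := GP_finite xi N).
  assert (Hs : sum_f_R0 (fun k => xi ^ k) N = (1 - xi ^ (N+1)) / (1 - xi)).
  { apply Rmult_eq_reg_r with (xi - 1). rewrite G. field. lra. lra. }
  rewrite Hs in E. replace (N+1)%nat with (S N) in E by lia.
  assert (E2 : ln (1 / (1 - x)) - Sp N x = xi ^ S N / (1 - xi) * x).
  { assert (E3 : / (1 - xi) - (1 - xi ^ S N) / (1 - xi) = xi ^ S N / (1 - xi)) by (field; lra).
    rewrite E3 in E. lra. }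
  rewrite E2.
  assert (P1 : 0 <= xi ^ S N) by (apply pow_le; lra).
  assert (P2 : xi ^ S N <= x ^ S N) by (apply pow_incr; lra).
  split.
  - apply Rmult_le_pos; [|lra]. apply Rdiv_le_0_compat; lra.
  - 
    assert (xi ^ S N / (1 - xi) <= x ^ S N / (1 - x)).
    { unfold Rdiv. apply Rmult_le_compat; auto. left; apply Rinv_0_lt_compat; lra.
      apply Rinv_le_contravar; lra. }
    apply Rle_trans with (x ^ S N / (1 - x) * x); [apply Rmult_le_compat_r; lra|].
    right. simpl. field. lra.
Qed.

Lemma Lser x : 0 < x < 1 ->
  Un_cv (fun N => Sp N x) (ln (1 / (1 - x))).
Proof.
  intros Hx. apply is_lim_seq_Reals.
  set (L := ln (1 / (1 - x))).
  apply is_lim_seq_le_le with (u := fun N => L - x ^ (S (S N)) / (1 - x)) (w := fun _ => L).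
  { intros N. pose proof (Rem_bound N x Hx). fold L in H. lra. }
  2: apply is_lim_seq_const.
  assert (H0 : is_lim_seq (fun N => x ^ (S (S N)) / (1 - x)) 0).
  { assert (G : is_lim_seq (fun N => x ^ (S (S N))) 0).
    { apply (is_lim_seq_incr_1 (fun n => x ^ S n)).
      apply (is_lim_seq_incr_1 (fun n => x ^ n)).
      apply is_lim_seq_geom. rewrite Rabs_pos_eq; lra. }
    apply (is_lim_seq_scal_r _ (/ (1 - x))) in G. simpl in G.
    rewrite Rmult_0_l in G. exact G. }
  replace (Finite L) with (Finite (L - 0)) by (f_equal; ring).
  apply is_lim_seq_minus'. apply is_lim_seq_const. exact H0.
Qed.

Lemma Qser x : 0 < x < 1 ->
  infinite_sum (fun k => x ^ k / INR (S k)) (ln (1 / (1 - x)) / x).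
Proof.
  intros Hx. pose proof (Lser x Hx) as H.
  apply is_lim_seq_Reals in H. apply is_lim_seq_Reals.
  apply is_lim_seq_ext with (u := fun N => Sp N x * / x).
  { intros N. unfold Sp. induction N. simpl. field. lra.
    rewrite !tech5. rewrite <- IHN. simpl. field. split; [|lra].
    change (match N with 0%nat => 1 | S _ => INR N + 1 end) with (INR (S N)).
    pose proof (pos_INR (S N)); lra. }
  apply (is_lim_seq_scal_r _ (/ x) (ln (1 / (1 - x)))) in H. exact H.
Qed.


Lemma sum_nonneg_le (f : nat -> R) N : (forall k, (k <= N)%nat -> 0 <= f k) -> 0 <= sum_f_R0 f N.
Proof.
  induction N; intros H. simpl; apply H; lia.
  rewrite tech5. apply Rplus_le_le_0_compat. apply IHN; intros; apply H; lia. apply H; lia.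
Qed.

Section BK.
Variables (al be : nat -> R) (x y : R).
Hypothesis hal : forall n, 0 <= al n.
Hypothesis hbe : forall n, 0 <= be n.
Hypothesis hmon : forall m n, (m <= n)%nat -> al n * be m <= al m * be n.
Hypothesis hxy : 0 <= x <= y.

Let Px N := sum_f_R0 (fun n => al n * x ^ n) N.
Let Py N := sum_f_R0 (fun n => al n * y ^ n) N.
Let Qx N := sum_f_R0 (fun n => be n * x ^ n) N.
Let Qy N := sum_f_R0 (fun n => be n * y ^ n) N.

Lemma pow_cross k N : (k <= N)%nat -> x ^ S N * y ^ k <= y ^ S N * x ^ k.
Proof.
  intros Hk. replace (S N) with (k + (S N - k))%nat by lia. rewrite !pow_add.
  assert (0 <= x ^ k) by (apply pow_le; lra).
  assert (0 <= y ^ k) by (apply pow_le; lra).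
  assert (x ^ (S N - k) <= y ^ (S N - k)) by (apply pow_incr; lra).
  assert (0 <= x ^ k * y ^ k) by (apply Rmult_le_pos; lra).
  nra.
Qed.

Lemma incr_eq N : forall a b X Y,
  b * (Y * Px N - X * Py N) - a * (Y * Qx N - X * Qy N) =
  sum_f_R0 (fun k => (b * al k - a * be k) * (Y * x ^ k - X * y ^ k)) N.
Proof.
  intros. unfold Px, Py, Qx, Qy. induction N. simpl; ring.
  rewrite !tech5. rewrite <- IHN. ring.
Qed.

Lemma D_nonneg N : 0 <= Px N * Qy N - Py N * Qx N.
Proof.
  induction N. unfold Px, Py, Qx, Qy. simpl. lra.
  assert (E : Px (S N) * Qy (S N) - Py (S N) * Qx (S N) =
     (Px N * Qy N - Py N * Qx N) +
     (be (S N) * (y ^ S N * Px N - x ^ S N * Py N) - al (S N) * (y ^ S N * Qx N - x ^ S N * Qy N))).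
  { unfold Px, Py, Qx, Qy. rewrite !tech5. ring. }
  rewrite E, incr_eq. apply Rplus_le_le_0_compat; auto.
  apply sum_nonneg_le. intros k Hk. apply Rmult_le_pos.
  - pose proof (hmon k (S N) ltac:(lia)). lra.
  - pose proof (pow_cross k N Hk). lra.
Qed.

Lemma BK_ineq P1 Q1 P2 Q2 :
  infinite_sum (fun n => al n * x ^ n) P1 -> infinite_sum (fun n => be n * x ^ n) Q1 ->
  infinite_sum (fun n => al n * y ^ n) P2 -> infinite_sum (fun n => be n * y ^ n) Q2 ->
  P2 * Q1 <= P1 * Q2.
Proof.
  intros H1 H2 H3 H4.
  assert (C : Un_cv (fun N => Px N * Qy N - Py N * Qx N) (P1 * Q2 - P2 * Q1)).
  { apply CV_minus; apply CV_mult; assumption. }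
  assert (0 <= P1 * Q2 - P2 * Q1).
  { assert (K : Un_cv (fun _ : nat => 0) 0).
    { intros e He; exists 0%nat; intros; unfold R_dist; rewrite Rminus_0_r, Rabs_R0; lra. }
    eapply Rle_cv_lim; [|exact K|exact C]. intros n; apply D_nonneg. }
  lra.
Qed.
End BK.


Lemma Rpower_pos a s : 0 < Rpower a s.
Proof. unfold Rpower; apply exp_pos. Qed.

Lemma Rpower_1_base s : Rpower 1 s = 1.
Proof. unfold Rpower. rewrite ln_1, Rmult_0_r. apply exp_0. Qed.

Lemma exp_le x y : x <= y -> exp x <= exp y.
Proof. intros [H|H]. left; apply exp_increasing; auto. subst; lra. Qed.

Lemma key1 a s : 0 < a -> 0 < s -> Rpower a s * (1 + s / (a + 1)) <= Rpower (a + 1) s.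
Proof.
  intros Ha Hs. unfold Rpower.
  replace (s * ln (a + 1)) with (s * ln a + s * (ln (a+1) - ln a)) by ring.
  rewrite exp_plus.
  assert (L : 1 / (a + 1) <= ln (a + 1) - ln a).
  { pose proof (exp_ineq1_le (ln (a / (a + 1)))).
    rewrite exp_ln in H by (apply Rdiv_lt_0_compat; lra).
    unfold Rdiv in H. rewrite ln_mult, ln_Rinv in H by (try apply Rinv_0_lt_compat; lra).
    assert (a / (a+1) = 1 - 1/(a+1)) by (field; lra). lra. }
  apply Rmult_le_compat_l. left; apply exp_pos.
  eapply Rle_trans; [|apply exp_ineq1_le].
  assert (s / (a+1) = s * (1/(a+1))) by (field; lra). rewrite H.
  apply Rplus_le_compat_l. apply Rmult_le_compat_l; lra.
Qed.

Lemma bernoulli t s : 0 <= t -> 0 < s <= 1 -> Rpower (1 + t) s <= 1 + s * t.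
Proof.
  intros Ht Hs. destruct Ht as [Ht|Ht].
  2: { subst. rewrite Rplus_0_r, Rpower_1_base. lra. }
  destruct (MVT_cor2 (fun y => Rpower y s) (fun y => s * Rpower y (s - 1)) 1 (1 + t))
    as [xi [E Hxi]]. lra.
  { intros y Hy. apply derivable_pt_lim_power. lra. }
  rewrite Rpower_1_base in E.
  assert (Rpower xi (s - 1) <= 1).
  { unfold Rpower. apply Rle_trans with (exp 0); [apply exp_le|rewrite exp_0; lra].
    assert (0 < ln xi) by (rewrite <- ln_1; apply ln_increasing; lra). nra. }
  assert (Rpower (1 + t) s = 1 + s * Rpower xi (s - 1) * t) by lra.
  rewrite H0. destruct Hs. assert (0 < s * t) by nra.
  assert (0 <= (s * t) * (1 - Rpower xi (s - 1))) by (apply Rmult_le_pos; lra). nra.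
Qed.

Lemma key2 a s : 0 < a -> 0 < s <= 1 -> Rpower (a + 1) s <= Rpower a s * (1 + s / a).
Proof.
  intros Ha Hs.
  replace (a + 1) with (a * (1 + / a)) by (field; lra).
  rewrite <- Rpower_mult_distr by (try lra; assert (0 < / a) by (apply Rinv_0_lt_compat; lra); lra).
  apply Rmult_le_compat_l. left; apply Rpower_pos.
  replace (s / a) with (s * / a) by (unfold Rdiv; ring).
  apply bernoulli; auto. left; apply Rinv_0_lt_compat; lra.
Qed.

Definition u s n := gauss_seq s (S n).
Definition w s n := Rpower (INR (S (S n))) s * INR (Factorial.fact (S n)) / poch s (S (S n)).





Lemma u_S s n : u s (S n) = Rpower (INR (S n) + 1) s * (INR (S n) + 1) * INR (Factorial.fact (S n))
   / (poch s (S (S n)) * (s + (INR (S n) + 1))).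
Proof.
  unfold u, gauss_seq. rewrite (S_INR (S n)). 
  replace (poch s (S (S (S n)))) with (poch s (S (S n)) * (s + INR (S (S n)))) by reflexivity.
  rewrite (fact_simpl (S n)), mult_INR, (S_INR (S n)). unfold Rdiv. ring.
Qed.

Lemma u_grow s n : 0 < s -> u s n <= u s (S n).
Proof.
  intros Hs. rewrite u_S. unfold u, gauss_seq.
  set (a := INR (S n)). assert (Ha : 0 < a) by (apply lt_0_INR; lia).
  pose proof (key1 a s Ha Hs).
  set (P := poch s (S (S n))). assert (0 < P) by (apply poch_pos; lra).
  set (f := INR (Factorial.fact (S n))). assert (0 < f) by apply fact_pos.
  set (A := Rpower a s) in *. set (A' := Rpower (a+1) s) in *.
  assert (A * (a + 1 + s) <= A' * (a + 1)).
  { replace (A * (a + 1 + s)) with (A * (1 + s / (a + 1)) * (a + 1)) by (field; lra).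
    apply Rmult_le_compat_r; lra. }
  replace (A' * (a + 1) * f / (P * (s + (a + 1)))) with ((A' * (a+1)) * (f / (P * (s + (a+1))))) by (field; lra).
  replace (A * f / P) with ((A * (a + 1 + s)) * (f / (P * (s + (a+1))))) by (field; lra).
  apply Rmult_le_compat_r; [|lra]. apply Rlt_le, Rdiv_lt_0_compat; nra.
Qed.

Lemma u_le_w s n : 0 < s -> u s n <= w s n.
Proof.
  intros Hs. unfold u, w, gauss_seq. unfold Rdiv. apply Rmult_le_compat_r.
  left; apply Rinv_0_lt_compat, poch_pos; lra.
  apply Rmult_le_compat_r. left; apply fact_pos.
  apply Rle_Rpower_l. lra. split. apply lt_0_INR; lia. apply le_INR; lia.
Qed.

Lemma w_decr s n : 0 < s <= 1 -> w s (S n) <= w s n.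
Proof.
  intros Hs. unfold w.
  rewrite (S_INR (S (S n))), (S_INR (S n)).
  replace (poch s (S (S (S n)))) with (poch s (S (S n)) * (s + INR (S (S n)))) by reflexivity.
  rewrite (fact_simpl (S n)), mult_INR, (S_INR (S n)).
  set (a := INR (S n)). assert (Ha : 0 < a) by (apply lt_0_INR; lia).
  pose proof (key2 (a+1) s ltac:(lra) Hs).
  set (P := poch s (S (S n))). assert (0 < P) by (apply poch_pos; lra).
  set (f := INR (Factorial.fact (S n))). assert (0 < f) by apply fact_pos.
  set (A := Rpower (a+1) s) in *. set (A' := Rpower (a+1+1) s) in *.
  assert (A' * (a + 1) <= A * (a + 1 + s)).
  { replace (A * (a + 1 + s)) with (A * (1 + s / (a + 1)) * (a + 1)) by (field; lra).
    apply Rmult_le_compat_r; lra. }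
  replace (A' * ((a + 1) * f) / (P * (s + (a + 1)))) with ((A' * (a+1)) * (f / (P * (s + (a+1))))) by (field; lra).
  replace (A * f / P) with ((A * (a + 1 + s)) * (f / (P * (s + (a+1))))) by (field; lra).
  apply Rmult_le_compat_r; [|lra]. apply Rlt_le, Rdiv_lt_0_compat; nra.
Qed.

Lemma poch_shift a m : poch (a - 1) (S m) = (a - 1) * poch a m.
Proof.
  induction m. simpl. ring.
  change (poch (a - 1) (S (S m))) with (poch (a-1) (S m) * (a - 1 + INR (S m))).
  rewrite IHm. simpl poch. rewrite S_INR. ring.
Qed.

Lemma u_shift s n : 1 < s -> u s n = (s - 1) * INR (S n) / (s + INR (S n)) * u (s - 1) n.
Proof.
  intros Hs. unfold u, gauss_seq.
  replace (Rpower (INR (S n)) s) with (INR (S n) * Rpower (INR (S n)) (s - 1)).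
  2: { assert (Ee : Rpower (INR (S n)) s = Rpower (INR (S n)) ((s-1)+1)) by (f_equal; ring).
       rewrite Ee, Rpower_plus, Rpower_1.
       ring. apply lt_0_INR; lia. }
  assert (E : poch (s - 1) (S (S (S n))) = poch (s - 1) (S (S n)) * (s + INR (S n))).
  { change (poch (s - 1) (S (S (S n)))) with (poch (s-1) (S (S n)) * (s - 1 + INR (S (S n)))).
    rewrite (S_INR (S n)). ring. }
  rewrite poch_shift in E.
  assert (0 < poch s (S (S n))) by (apply poch_pos; lra).
  assert (0 < poch (s-1) (S (S n))) by (apply poch_pos; lra).
  assert (0 < INR (S n)) by (apply lt_0_INR; lia).
  assert (poch s (S (S n)) = poch (s - 1) (S (S n)) * (s + INR (S n)) / (s - 1)).
  { rewrite <- E. field. lra. }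
  rewrite H2. field. repeat split; lra.
Qed.

Lemma u_pos s n : 0 < s -> 0 < u s n.
Proof.
  intros. unfold u, gauss_seq. apply Rdiv_lt_0_compat.
  apply Rmult_lt_0_compat. apply Rpower_pos. apply fact_pos. apply poch_pos; lra.
Qed.

Lemma w_le0 s n : 0 < s <= 1 -> w s n <= w s 0.
Proof.
  intros Hs. induction n. lra. pose proof (w_decr s n Hs). lra.
Qed.

Lemma u_bound s : 0 < s <= 2 -> exists M, forall n, u s n <= M.
Proof.
  intros Hs. destruct (Rle_or_lt s 1) as [H1|H1].
  - exists (w s 0). intros n. pose proof (u_le_w s n ltac:(lra)). pose proof (w_le0 s n ltac:(lra)). lra.
  - exists ((s - 1) * w (s - 1) 0). intros n. rewrite u_shift by lra.
    pose proof (u_le_w (s-1) n ltac:(lra)). pose proof (w_le0 (s-1) n ltac:(lra)).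
    pose proof (u_pos (s-1) n ltac:(lra)).
    assert (0 < INR (S n)) by (apply lt_0_INR; lia).
    assert (INR (S n) / (s + INR (S n)) <= 1).
    { apply Rmult_le_reg_r with (s + INR (S n)). lra.
      unfold Rdiv. rewrite Rmult_assoc, Rinv_l by lra. lra. }
    assert (0 <= INR (S n) / (s + INR (S n))) by (apply Rlt_le, Rdiv_lt_0_compat; lra).
    replace ((s - 1) * INR (S n) / (s + INR (S n)) * u (s - 1) n)
      with ((s - 1) * (INR (S n) / (s + INR (S n)) * u (s - 1) n)) by (unfold Rdiv; ring).
    apply Rmult_le_compat_l. lra.
    assert (INR (S n) / (s + INR (S n)) * u (s - 1) n <= u (s-1) n) by nra.
    lra.
Qed.

Lemma Gamma_spec s : 0 < s <= 2 -> Un_cv (u s) (Gamma s) /\ 0 < Gamma s.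
Proof.
  intros Hs. destruct (u_bound s Hs) as [M HM].
  destruct (growing_cv (u s)) as [l Hl].
  { intros n. apply u_grow; lra. }
  { exists M. intros x [i ->]. apply HM. }
  assert (Hg : Un_cv (gauss_seq s) l).
  { intros e He. destruct (Hl e He) as [N HN]. exists (S N). intros n Hn.
    destruct n. lia. apply (HN n). lia. }
  assert (Hl2 : Un_cv (gauss_seq s) (Gamma s)).
  { unfold Gamma. apply epsilon_spec. exists l; exact Hg. }
  assert (l = Gamma s) by (eapply UL_sequence; eauto). subst l.
  split; auto.
  pose proof (growing_ineq (u s) (Gamma s) (fun n => u_grow s n ltac:(lra)) Hl 0).
  pose proof (u_pos s 0 ltac:(lra)). lra.
Qed.



Lemma tg_identity c d N : 0 < c -> 0 < d ->
  tcoef c d (S (S N)) * (u c N * u d N / u (c + d) N) = INR (S (S (S N))) / INR (S (S N)).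
Proof.
  intros Hc Hd. unfold tcoef, acoef, u, gauss_seq.
  set (a := INR (S N)).
  assert (Ha : 0 < a) by (apply lt_0_INR; lia).
  rewrite (Rpower_plus c d a).
  rewrite (fact_simpl (S N)), mult_INR.
  pose proof (Rpower_pos a c). pose proof (Rpower_pos a d).
  pose proof (poch_pos c (S (S N)) Hc). pose proof (poch_pos d (S (S N)) Hd).
  pose proof (poch_pos (c+d) (S (S N)) ltac:(lra)). pose proof (fact_pos (S N)).
  assert (0 < INR (S (S N))) by (apply lt_0_INR; lia).
  field. repeat split; lra.
Qed.

Lemma lim_ratio : is_lim_seq (fun N => INR (S (S (S N))) / INR (S (S N))) 1.
Proof.
  apply is_lim_seq_ext with (u := fun N => 1 + / INR (S (S N))).
  { intros N. rewrite (S_INR (S (S N))). field. apply not_0_INR; lia. }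
  replace (Finite 1) with (Rbar_plus 1 0) by (simpl; f_equal; ring).
  apply is_lim_seq_plus'. apply is_lim_seq_const.
  replace (Finite 0) with (Rbar_inv p_infty) by reflexivity.
  apply is_lim_seq_inv; [|discriminate].
  apply (is_lim_seq_incr_1 (fun n => INR (S n))).
  apply (is_lim_seq_incr_1 INR). apply is_lim_seq_INR.
Qed.

Lemma Beta_spec c d : 0 < c <= 1 -> 0 < d <= 1 ->
  0 < Beta c d /\ Un_cv (fun N => tcoef c d (S (S N))) (/ Beta c d).
Proof.
  intros Hc Hd.
  destruct (Gamma_spec c ltac:(lra)) as [Lc Pc].
  destruct (Gamma_spec d ltac:(lra)) as [Ld Pd].
  destruct (Gamma_spec (c+d) ltac:(lra)) as [Lcd Pcd].
  assert (HB : 0 < Beta c d).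
  { unfold Beta. apply Rdiv_lt_0_compat; auto. apply Rmult_lt_0_compat; auto. }
  split; auto.
  apply is_lim_seq_Reals in Lc, Ld, Lcd.
  assert (Hg : is_lim_seq (fun N => u c N * u d N / u (c + d) N) (Beta c d)).
  { unfold Beta, Rdiv. apply is_lim_seq_mult'. apply is_lim_seq_mult'; auto.
    apply (is_lim_seq_inv _ (Finite (Gamma (c+d)))) in Lcd. exact Lcd.
    intro E; injection E; lra. }
  apply is_lim_seq_Reals.
  apply is_lim_seq_ext with (u := fun N => INR (S (S (S N))) / INR (S (S N)) * / (u c N * u d N / u (c + d) N)).
  { intros N. rewrite <- (tg_identity c d N) by lra. field.
    pose proof (u_pos c N ltac:(lra)). pose proof (u_pos d N ltac:(lra)). pose proof (u_pos (c+d) N ltac:(lra)).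
    repeat split; lra. }
  replace (/ Beta c d) with (1 * / Beta c d) by ring.
  apply is_lim_seq_mult'. apply lim_ratio.
  apply (is_lim_seq_inv _ (Finite (Beta c d))) in Hg. exact Hg.
  intro E; injection E; lra.
Qed.


Lemma cv_const (k : R) : Un_cv (fun _ : nat => k) k.
Proof. intros e He; exists 0%nat; intros; unfold R_dist; rewrite Rminus_eq_0, Rabs_R0; lra. Qed.

Lemma sum_cmp (a b : nat -> R) (k A Bs : R) :
  (forall n, a n <= k * b n) -> infinite_sum a A -> infinite_sum b Bs -> A <= k * Bs.
Proof.
  intros H Ha Hb.
  assert (C : Un_cv (fun N => k * sum_f_R0 b N) (k * Bs)).
  { apply (CV_mult (fun _ => k) (fun N => sum_f_R0 b N)). apply cv_const. exact Hb. }
  eapply Rle_cv_lim; [|exact Ha|exact C].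
  intros N. induction N. simpl. apply H. rewrite !tech5. rewrite Rmult_plus_distr_l.
  apply Rplus_le_compat; auto.
Qed.

Lemma hyp_eq c d x : 0 < c -> 0 < d ->
  hyp_term c d (c + d) x = fun n => acoef c d n * x ^ n.
Proof.
  intros. apply functional_extensionality; intros n. unfold hyp_term, acoef.
  pose proof (fact_pos n). pose proof (poch_pos (c+d) n ltac:(lra)). field. lra.
Qed.

Lemma acoef_t c d n : acoef c d n = tcoef c d n * / INR (S n).
Proof. unfold tcoef. field. apply not_0_INR; lia. Qed.

Lemma Fser c d x : 0 < c <= 1 -> 0 < d <= 1 -> 0 < x < 1 ->
  infinite_sum (fun n => acoef c d n * x ^ n) (F c d (c + d) x).
Proof.
  intros Hc Hd Hx.
  assert (Ex : {l | Un_cv (fun N => sum_f_R0 (fun n => acoef c d n * x ^ n) N) l}).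
  { apply Rseries_CV_comp with (Bn := fun n => x ^ n).
    - intros n. rewrite acoef_t. pose proof (tcoef_le1 c d n Hc Hd).
      pose proof (acoef_pos c d n ltac:(lra) ltac:(lra)). rewrite acoef_t in H0.
      assert (0 < / INR (S n)) by (apply Rinv_0_lt_compat, lt_0_INR; lia).
      assert (/ INR (S n) <= 1).
      { rewrite <- Rinv_1. apply Rinv_le_contravar. lra. rewrite S_INR. pose proof (pos_INR n); lra. }
      assert (0 <= x ^ n) by (apply pow_le; lra).
      split. apply Rmult_le_pos; [lra|auto].
      assert (tcoef c d n * / INR (S n) <= 1).
      { assert (0 < tcoef c d n) by (apply Rmult_lt_reg_r with (/ INR (S n)); lra). nra. }
      nra.
    - exists (/ (1 - x)). pose proof (GP_infinite x ltac:(rewrite Rabs_pos_eq; lra)).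
      intros e He. destruct (H e He) as [N HN]. exists N. intros n Hn.
      specialize (HN n Hn). replace (sum_f_R0 (fun n0 => x ^ n0) n) with (sum_f_R0 (fun n0 => 1 * x ^ n0) n). exact HN.
      apply sum_eq; intros; ring. }
  destruct Ex as [l Hl].
  unfold F. rewrite hyp_eq by lra. apply epsilon_spec. exists l. exact Hl.
Qed.

Definition Q x := ln (1 / (1 - x)) / x.

Lemma Qser' x : 0 < x < 1 -> infinite_sum (fun n => / INR (S n) * x ^ n) (Q x).
Proof.
  intros Hx. pose proof (Qser x Hx). unfold Q.
  replace (fun n => / INR (S n) * x ^ n) with (fun k => x ^ k / INR (S k)). exact H.
  apply functional_extensionality; intros; unfold Rdiv; ring.
Qed.

Lemma L_pos x : 0 < x < 1 -> 0 < ln (1 / (1 - x)).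
Proof.
  intros. rewrite <- ln_1. apply ln_increasing. lra.
  apply Rmult_lt_reg_r with (1 - x). lra. unfold Rdiv. rewrite Rmult_assoc, Rinv_l; lra.
Qed.

Lemma Q_pos x : 0 < x < 1 -> 0 < Q x.
Proof. intros. unfold Q. apply Rdiv_lt_0_compat. apply L_pos; auto. lra. Qed.

Lemma h_eq c d x : 0 < x < 1 -> h c d x = F c d (c + d) x / Q x.
Proof. intros. unfold h, Q. pose proof (L_pos x H). field. lra. Qed.

Lemma tcoef_mono c d m n : 0 < c <= 1 -> 0 < d <= 1 -> (m <= n)%nat -> tcoef c d n <= tcoef c d m.
Proof.
  intros Hc Hd H. induction H. lra. pose proof (tcoef_S c d m0 Hc Hd). lra.
Qed.

Lemma F_mono c d z x : 0 < c <= 1 -> 0 < d <= 1 -> 0 < z <= x -> x < 1 ->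
  F c d (c + d) x * Q z <= F c d (c + d) z * Q x.
Proof.
  intros Hc Hd Hz Hx.
  apply (BK_ineq (acoef c d) (fun n => / INR (S n)) z x).
  - intros m n Hmn. rewrite !acoef_t. pose proof (tcoef_mono c d m n Hc Hd Hmn).
    assert (0 < / INR (S n)) by (apply Rinv_0_lt_compat, lt_0_INR; lia).
    assert (0 < / INR (S m)) by (apply Rinv_0_lt_compat, lt_0_INR; lia).
    assert (0 < / INR (S n) * / INR (S m)) by (apply Rmult_lt_0_compat; lra).
    nra.
  - lra.
  - apply Fser; lra.
  - apply Qser'; lra.
  - apply Fser; lra.
  - apply Qser'; lra.
Qed.

Lemma tB c d n : 0 < c <= 1 -> 0 < d <= 1 -> / Beta c d <= tcoef c d n.
Proof.
  intros Hc Hd. destruct (Beta_spec c d Hc Hd) as [HB L].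
  assert (Hdec : Un_decreasing (fun N => tcoef c d (S (S N)))).
  { intros N. apply tcoef_S; auto. }
  pose proof (decreasing_ineq _ _ Hdec L n).
  pose proof (tcoef_mono c d n (S (S n)) Hc Hd ltac:(lia)). lra.
Qed.

Lemma z_facts x p : 0 < x < 1 -> 1 <= p ->
  let z := 1 - Rpower (1 - x) (1 / p) in
  0 < z <= x /\ ln (1 / (1 - z)) = / p * ln (1 / (1 - x)).
Proof.
  intros Hx Hp z.
  assert (Hl : ln (1 - x) < 0) by (rewrite <- ln_1; apply ln_increasing; lra).
  assert (Hp' : 0 < 1 / p <= 1).
  { split. apply Rdiv_lt_0_compat; lra. unfold Rdiv; rewrite Rmult_1_l. rewrite <- Rinv_1. apply Rinv_le_contravar; lra. }
  split.
  - unfold z, Rpower. split.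
    + assert (exp (1 / p * ln (1 - x)) < 1).
      { apply Rlt_le_trans with (exp 0); [apply exp_increasing; nra|rewrite exp_0; lra]. }
      lra.
    + assert (exp (ln (1 - x)) <= exp (1 / p * ln (1 - x))) by (apply exp_le; nra).
      rewrite exp_ln in H by lra. lra.
  - unfold z. replace (1 - (1 - Rpower (1 - x) (1 / p))) with (Rpower (1 - x) (1 / p)) by ring.
    unfold Rdiv at 1 3. rewrite !Rmult_1_l.
    rewrite !ln_Rinv by (try apply Rpower_pos; lra). rewrite ln_Rpower. field. lra.
Qed.

Theorem mainTheorem4 (c d p : R)
  (hc : 0 < c <= 1) (hd : 0 < d <= 1) (hp : 1 <= p) :
  (forall x : R, 0 < x < 1 ->
     let z := 1 - Rpower (1 - x) (1 / p) in
     Beta c d >= Beta c d * h c d z /\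
     Beta c d * h c d z >= Beta c d * h c d x /\
     Beta c d * h c d x >= 1 /\
     F c d (c + d) z >= / p * F c d (c + d) x) /\
  (c = 1 -> d = 1 -> Beta c d = 1 /\ forall x : R, 0 < x < 1 -> h c d x = 1).
Proof.
  destruct (Beta_spec c d hc hd) as [HB LB].
  split.
  - intros x Hx z. destruct (z_facts x p Hx hp) as [Hz Lz]. fold z in Hz, Lz.
    assert (Hz1 : 0 < z < 1) by lra.
    pose proof (Q_pos x Hx) as Qx. pose proof (Q_pos z Hz1) as Qz.
    rewrite (h_eq c d z Hz1), (h_eq c d x Hx).
    assert (FQz : F c d (c + d) z <= 1 * Q z).
    { apply (sum_cmp (fun n => acoef c d n * z ^ n) (fun n => / INR (S n) * z ^ n)).
      2: apply Fser; lra. 2: apply Qser'; lra.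
      intros n. rewrite acoef_t. pose proof (tcoef_le1 c d n hc hd).
      assert (0 < / INR (S n)) by (apply Rinv_0_lt_compat, lt_0_INR; lia).
      assert (0 <= z ^ n) by (apply pow_le; lra).
      assert (0 <= / INR (S n) * z ^ n) by (apply Rmult_le_pos; lra).
      replace (tcoef c d n * / INR (S n) * z ^ n) with (tcoef c d n * (/ INR (S n) * z ^ n)) by ring.
      nra. }
    assert (QFx : Q x <= Beta c d * F c d (c + d) x).
    { apply (sum_cmp (fun n => / INR (S n) * x ^ n) (fun n => acoef c d n * x ^ n)).
      2: apply Qser'; lra. 2: apply Fser; lra.
      intros n. rewrite acoef_t. pose proof (tB c d n hc hd).
      assert (0 < / INR (S n)) by (apply Rinv_0_lt_compat, lt_0_INR; lia).
      assert (0 <= x ^ n) by (apply pow_le; lra).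
      assert (0 <= / INR (S n) * x ^ n) by (apply Rmult_le_pos; lra).
      assert (1 <= Beta c d * tcoef c d n).
      { apply Rmult_le_compat_l with (r := Beta c d) in H; [|lra].
        rewrite Rinv_r in H; lra. }
      replace (Beta c d * (tcoef c d n * / INR (S n) * x ^ n)) with
        ((Beta c d * tcoef c d n) * (/ INR (S n) * x ^ n)) by ring.
      nra. }
    pose proof (F_mono c d z x hc hd ltac:(lra) ltac:(lra)) as M.
    assert (Fx0 : 0 <= F c d (c + d) x).
    { apply Rmult_le_reg_l with (Beta c d); lra. }
    assert (Fz0 : 0 <= F c d (c + d) z).
    { assert (0 <= F c d (c + d) z * Q x) by nra. 
      destruct (Rle_or_lt 0 (F c d (c + d) z)); auto. nra. }
    repeat split.
    + apply Rle_ge. apply Rle_trans with (Beta c d * 1); [|lra].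
      apply Rmult_le_compat_l; [lra|].
      apply Rmult_le_reg_r with (Q z); auto. unfold Rdiv; rewrite Rmult_assoc, Rinv_l; lra.
    + apply Rle_ge. apply Rmult_le_compat_l; [lra|].
      apply Rmult_le_reg_r with (Q z * Q x). nra.
      replace (F c d (c + d) x / Q x * (Q z * Q x)) with (F c d (c + d) x * Q z) by (field; lra).
      replace (F c d (c + d) z / Q z * (Q z * Q x)) with (F c d (c + d) z * Q x) by (field; lra).
      exact M.
    + apply Rle_ge.
      replace (Beta c d * (F c d (c + d) x / Q x)) with ((Beta c d * F c d (c + d) x) / Q x) by (field; lra).
      apply Rmult_le_reg_r with (Q x); auto. unfold Rdiv; rewrite Rmult_assoc, Rinv_l; lra.
    + apply Rle_ge.
      assert (Qzx : Q z = Q x * x / (p * z)).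
      { unfold Q. rewrite Lz. field. lra. }
      rewrite Qzx in M.
      assert (E : F c d (c + d) x * (Q x * x / (p * z)) = Q x * (F c d (c + d) x * x / (p * z))) by (field; lra).
      rewrite E, (Rmult_comm (F c d (c+d) z)) in M.
      apply Rmult_le_reg_l in M; [|lra].
      eapply Rle_trans; [|exact M].
      replace (F c d (c + d) x * x / (p * z)) with (/ p * F c d (c + d) x * (x / z)) by (field; lra).
      apply Rle_trans with (/ p * F c d (c + d) x * 1); [lra|].
      apply Rmult_le_compat_l. apply Rmult_le_pos; [left; apply Rinv_0_lt_compat; lra|lra].
      apply Rmult_le_reg_r with z. lra. unfold Rdiv; rewrite Rmult_assoc, Rinv_l; lra.
  - intros -> ->.
    assert (T : forall n, tcoef 1 1 n = 1) by apply tcoef_11.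
    assert (B1 : Beta 1 1 = 1).
    { assert (Un_cv (fun N => tcoef 1 1 (S (S N))) 1).
      { eapply Un_cv_ext. 2: apply cv_const. intros; simpl; rewrite T; auto. }
      pose proof (UL_sequence _ _ _ LB H).
      rewrite <- (Rinv_inv (Beta 1 1)), H0. apply Rinv_1. }
    split; auto.
    intros x Hx. rewrite h_eq by auto.
    assert (F 1 1 (1 + 1) x = Q x).
    { eapply uniqueness_sum. apply Fser; lra.
      replace (fun n => acoef 1 1 n * x ^ n) with (fun n => / INR (S n) * x ^ n).
      apply Qser'; auto. apply functional_extensionality; intros n. rewrite acoef_t, T. ring. }
    rewrite H. pose proof (Q_pos x Hx). field. lra.
Qed.
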